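(* Let $n\geq 2$, $1\leq k\leq n-1$ and $w\in\mathfrak{S}_n$. The intersection (as sets of positions) of a maximal $k$-ascending section and a maximal $k$-descending section of $w$ is empty or consists of one element. Two distinct maximal $k$-ascending sections of $w$ do not intersect.
   Context: $\mathfrak{S}_n$ is the set of permutations $w=w_1\cdots w_n$ of $\{1,\dots,n\}$. A section of $w$ is a consecutive block $w_sw_{s+1}\cdots w_t$ ($s\le t$), identified with its set of positions $\{s,\dots,t\}$. A section $w_s\cdots w_t$ is a $k$-up if $s<t$ and $w_t-w_s\geq k$, and a $k$-down if $s<t$ and $w_s-w_t\geq k$; a $k$-up/$k$-down ''in'' $w_a\cdots w_b$ means one $w_s\cdots w_t$ with $a\le s<t\le b$. A section $w_i\cdots w_j$ ($i<j$) is $k$-ascending if $w_i=\min\{w_i,\dots,w_j\}$, $w_j=\max\{w_i,\dots,w_j\}$, $w_j-w_i\geq k$, and there is no $k$-down in $w_i\cdots w_j$. It is $k$-descending if $w_i=\max\{w_i,\dots,w_j\}$, $w_j=\min\{w_i,\dots,w_j\}$, $w_i-w_j\geq k$, and there is no $k$-up in $w_i\cdots w_j$. A $k$-ascending (resp. $k$-descending) section is maximal if it is not contained in another $k$-ascending (resp. $k$-descending) section. *)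

(* Defs.v *)
From mathcomp Require Import all_boot all_order all_fingroup.
Set Implicit Arguments. Unset Strict Implicit. Unset Printing Implicit Defensive.

(* Permutations of {1..n} are modelled as w : 'S_n (permutations of 'I_n =
   {0..n-1}); positions and values are shifted by 1, which does not affect
   differences or comparisons.  A section w_s..w_t is identified by its pair
   of endpoint positions (s,t), s <= t, its set of positions being [s,t]. *)

Section Sections.
Variable n : nat.
Variable w : 'S_n.

Definition wv (p : 'I_n) : nat := w p.

Definition sect (s t : 'I_n) : {set 'I_n} := [set p : 'I_n | (s <= p <= t)%N].

Definition kup (k : nat) (s t : 'I_n) : bool := (s < t)%N && (wv s + k <= wv t)%N.
Definition kdown (k : nat) (s t : 'I_n) : bool := (s < t)%N && (wv t + k <= wv s)%N.

Definition has_kup_in (k : nat) (a b : 'I_n) : bool :=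
  [exists s : 'I_n, exists t : 'I_n, [&& (a <= s)%N, (t <= b)%N & kup k s t]].
Definition has_kdown_in (k : nat) (a b : 'I_n) : bool :=
  [exists s : 'I_n, exists t : 'I_n, [&& (a <= s)%N, (t <= b)%N & kdown k s t]].

Definition k_ascending (k : nat) (i j : 'I_n) : bool :=
  [&& (i < j)%N,
      [forall p in sect i j, wv i <= wv p]%N,
      [forall p in sect i j, wv p <= wv j]%N,
      (wv i + k <= wv j)%N &
      ~~ has_kdown_in k i j].

Definition k_descending (k : nat) (i j : 'I_n) : bool :=
  [&& (i < j)%N,
      [forall p in sect i j, wv p <= wv i]%N,
      [forall p in sect i j, wv j <= wv p]%N,
      (wv j + k <= wv i)%N &
      ~~ has_kup_in k i j].

Definition max_k_ascending (k : nat) (i j : 'I_n) : bool :=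
  k_ascending k i j &&
  [forall i' : 'I_n, forall j' : 'I_n,
     (k_ascending k i' j' && (sect i j \subset sect i' j')) ==> ((i' == i) && (j' == j))].

Definition max_k_descending (k : nat) (i j : 'I_n) : bool :=
  k_descending k i j &&
  [forall i' : 'I_n, forall j' : 'I_n,
     (k_descending k i' j' && (sect i j \subset sect i' j')) ==> ((i' == i) && (j' == j))].

End Sections.

(* Main.v *)
Require Import Defs.
From mathcomp Require Import all_boot all_order all_fingroup.
From mathcomp Require Import zify.

Section H.
Variable n k : nat.
Variable w : 'S_n.

Lemma wv_inj (a b : 'I_n) : wv w a = wv w b -> a = b.
Proof. by move=> e; apply: (perm_inj (s:=w)); apply: val_inj. Qed.

Lemma asc_facts (i j : 'I_n) : k_ascending w k i j ->
  [/\ (i < j)%N, (forall p : 'I_n, (i <= p)%N -> (p <= j)%N -> (wv w i <= wv w p)%N),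
      (forall p : 'I_n, (i <= p)%N -> (p <= j)%N -> (wv w p <= wv w j)%N),
      (wv w i + k <= wv w j)%N &
      (forall s t : 'I_n, (i <= s)%N -> (t <= j)%N -> (s < t)%N -> (wv w t + k <= wv w s)%N -> False)].
Proof.
move/and5P=> [Hij /forall_inP H1 /forall_inP H2 Hk /existsPn H3]; split=> //.
- by move=> p a b; apply: H1; rewrite inE a b.
- by move=> p a b; apply: H2; rewrite inE a b.
- move=> s t a b c d; move/existsPn: (H3 s) => /(_ t).
  by rewrite a b /kdown c d.
Qed.

Lemma desc_facts (i j : 'I_n) : k_descending w k i j ->
  [/\ (i < j)%N, (forall p : 'I_n, (i <= p)%N -> (p <= j)%N -> (wv w p <= wv w i)%N),
      (forall p : 'I_n, (i <= p)%N -> (p <= j)%N -> (wv w j <= wv w p)%N),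
      (wv w j + k <= wv w i)%N &
      (forall s t : 'I_n, (i <= s)%N -> (t <= j)%N -> (s < t)%N -> (wv w s + k <= wv w t)%N -> False)].
Proof.
move/and5P=> [Hij /forall_inP H1 /forall_inP H2 Hk /existsPn H3]; split=> //.
- by move=> p a b; apply: H1; rewrite inE a b.
- by move=> p a b; apply: H2; rewrite inE a b.
- move=> s t a b c d; move/existsPn: (H3 s) => /(_ t).
  by rewrite a b /kup c d.
Qed.

Lemma asc_intro (i j : 'I_n) : (i < j)%N ->
  (forall p : 'I_n, (i <= p)%N -> (p <= j)%N -> (wv w i <= wv w p)%N) ->
  (forall p : 'I_n, (i <= p)%N -> (p <= j)%N -> (wv w p <= wv w j)%N) ->
  (wv w i + k <= wv w j)%N ->
  (forall s t : 'I_n, (i <= s)%N -> (t <= j)%N -> (s < t)%N -> (wv w t + k <= wv w s)%N -> False) ->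
  k_ascending w k i j.
Proof.
move=> Hij H1 H2 Hk H3; apply/and5P; split=> //.
- by apply/forall_inP=> p; rewrite inE => /andP[a b]; apply: H1.
- by apply/forall_inP=> p; rewrite inE => /andP[a b]; apply: H2.
- apply/existsPn=> s; apply/existsPn=> t; apply/negP=> /and3P[a b /andP[c d]].
  exact: (H3 s t).
Qed.

Lemma max_asc_P (i j : 'I_n) : max_k_ascending w k i j ->
  forall i2 j2 : 'I_n, k_ascending w k i2 j2 -> (i2 <= i)%N -> (j <= j2)%N -> i2 = i /\ j2 = j.
Proof.
move=> /andP[_ /forallP H] i2 j2 A a b.
move/forallP: (H i2) => /(_ j2) /implyP.
have S : sect i j \subset sect i2 j2.
  apply/subsetP=> x; rewrite !inE => /andP[c d]; apply/andP; split; lia.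
by rewrite A S => /(_ isT) /andP[/eqP -> /eqP ->].
Qed.

Lemma part2 (i j i' j' p : 'I_n) : max_k_ascending w k i j -> max_k_ascending w k i' j' ->
  (i <= i')%N -> (i' <= p)%N -> (p <= j)%N -> (i <= p)%N -> (p <= j')%N -> i = i' /\ j = j'.
Proof.
move=> M M' a b c d e.
have [A1 A2 A3 A4 A5] := asc_facts _ _ (proj1 (andP M)).
have [B1 B2 B3 B4 B5] := asc_facts _ _ (proj1 (andP M')).
case: (leqP j' j) => hj.
  by have [-> ->] := max_asc_P _ _ M' _ _ (proj1 (andP M)) a hj.
case: (eqVneq i i') => hi.
  subst i'; have [_ ->] := max_asc_P _ _ M _ _ (proj1 (andP M')) (leqnn _) (ltnW hj); by [].
have hi' : (i < i')%N by rewrite ltn_neqAle a andbT; apply/eqP=> /val_inj; apply/eqP.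
have K : k_ascending w k i j'.
  apply: asc_intro.
  - lia.
  - move=> q q1 q2; case: (leqP q j) => q3; first exact: A2.
    have h1 : (i' <= q)%N by lia.
    have h2 : (i' <= j)%N by lia.
    have := B2 q h1 q2; have := A2 i' a h2; lia.
  - move=> q q1 q2; case: (leqP q j) => q3; last by apply: B3 => //; lia.
    have h1 : (i' <= j)%N by lia.
    have h2 : (j <= j')%N by lia.
    have := A3 q q1 q3; have := B3 j h1 h2; lia.
  - have h1 : (i' <= j)%N by lia.
    have h2 : (j <= j')%N by lia.
    have := B3 j h1 h2; lia.
  - move=> s t s1 t1 st d1.
    case: (leqP t j) => t2; first exact: (A5 s t s1 t2 st d1).
    case: (leqP i' s) => s2; first exact: (B5 s t s2 t1 st d1).
    apply: (B5 j t) => //; first lia.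
    have h1 : (s <= j)%N by lia.
    have := A3 s s1 h1; lia.
have [_ E] := max_asc_P _ _ M _ _ K (leqnn _) (ltnW hj).
by move: hj; rewrite E ltnn.
Qed.

End H.

Theorem lemma2p6 (n k : nat) (w : 'S_n) :
  (2 <= n)%N -> (1 <= k)%N -> (k <= n - 1)%N ->
  (forall i j i' j' : 'I_n,
     max_k_ascending w k i j -> max_k_descending w k i' j' ->
     (#|sect i j :&: sect i' j'| <= 1)%N) /\
  (forall i j i' j' : 'I_n,
     max_k_ascending w k i j -> max_k_ascending w k i' j' ->
     (i, j) <> (i', j') ->
     sect i j :&: sect i' j' = set0).
Proof.
move=> _ _ _; split.
- move=> i j i' j' /andP[M _] /andP[D _].
  have [A1 A2 A3 A4 A5] := @asc_facts _ _ _ _ _ M.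
  have [B1 B2 B3 B4 B5] := @desc_facts _ _ _ _ _ D.
  rewrite leqNgt; apply/negP=> /card_gt1P [x [y [Hx Hy Hxy]]].
  move: Hx Hy; rewrite !inE => /andP[/andP[x1 x2] /andP[x3 x4]] /andP[/andP[y1 y2] /andP[y3 y4]].
  have nxy : (x : nat) <> y by move=> e; move/eqP: Hxy; apply; apply: val_inj.
  case: (leqP i i') => h1; case: (leqP j j') => h2.
  + have e : wv w i' = wv w j.
      apply/eqP; rewrite eqn_leq; apply/andP; split.
      * apply: A3 => //; lia.
      * apply: B2; lia.
    have := congr1 val (@wv_inj _ _ _ _ e) => /=; lia.
  + apply: (A5 i' j') => //; lia.
  + apply: (B5 i j) => //; lia.
  + have e : wv w i = wv w j'.
      apply/eqP; rewrite eqn_leq; apply/andP; split.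
      * apply: A2; lia.
      * apply: B3; lia.
    have := congr1 val (@wv_inj _ _ _ _ e) => /=; lia.
- move=> i j i' j' M M' ne; apply/setP=> p; rewrite !inE.
  apply/negP=> /andP[/andP[a b] /andP[c d]]; apply: ne.
  case: (leqP i i') => h.
  + by have [-> ->] := @part2 _ _ _ _ _ _ _ _ M M' h c b a d.
  + by have [-> ->] := @part2 _ _ _ _ _ _ _ _ M' M (ltnW h) a d c b.
Qed.
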